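(* Let $n\geqslant 2$. Then the semigroup $\mathbf{I}\mathbb{N}_{\infty}^n$ is isomorphic to the semidirect product $\mathscr{S}_n\ltimes_{\mathfrak{h}}(\mathscr{P}_{\infty}(\mathbb{N}^n),\cup)$ of the free semilattice with unit $(\mathscr{P}_{\infty}(\mathbb{N}^n),\cup)$ by the symmetric group $\mathscr{S}_n$, where $\sigma\in\mathscr{S}_n$ acts on a finite set $F\subseteq\mathbb{N}^n$ by $(F)\mathfrak{h}_\sigma=(F)\alpha_\sigma=\{(\mathbf{x})\alpha_\sigma\colon\mathbf{x}\in F\}$. Equivalently, $\mathbf{I}\mathbb{N}_{\infty}^n\cong H(\mathbb{I})\ltimes_{\mathfrak{h}}E(\mathbf{I}\mathbb{N}_{\infty}^n)$ with $(\varepsilon)\mathfrak{h}_\sigma=\sigma^{-1}\varepsilon\sigma$, via $\alpha\mapsto(\sigma_\alpha,\alpha^{-1}\alpha)$, where $\sigma_\alpha$ is the unique unit with $\alpha=\sigma_\alpha\varepsilon$ for some idempotent $\varepsilon$.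
   Context: $\mathbb{N}=\{1,2,3,\ldots\}$, $n\geqslant 2$, and $\mathbb{N}^n$ carries the Euclidean metric $d$. A partial isometry of $\mathbb{N}^n$ is an injective partial map $\alpha\colon\mathbb{N}^n\rightharpoonup\mathbb{N}^n$ with $d((\mathbf{x})\alpha,(\mathbf{y})\alpha)=d(\mathbf{x},\mathbf{y})$ for all $\mathbf{x},\mathbf{y}\in\operatorname{dom}\alpha$; it is cofinite if $\mathbb{N}^n\setminus\operatorname{dom}\alpha$ and $\mathbb{N}^n\setminus\operatorname{ran}\alpha$ are finite. $\mathbf{I}\mathbb{N}_{\infty}^n$ is the monoid of all partial cofinite isometries of $\mathbb{N}^n$ under composition of partial maps written on the right: $\mathbf{x}(\alpha\beta)=(\mathbf{x}\alpha)\beta$. Its identity is the identity map $\mathbb{I}$, $H(\mathbb{I})$ is its group of units and $E(\mathbf{I}\mathbb{N}_{\infty}^n)$ its semilattice of idempotents. $\mathscr{S}_n$ is the group of permutations of $\{1,\ldots,n\}$ acting on the right (composed left to right); for $\sigma\in\mathscr{S}_n$, $\alpha_\sigma$ is the isometry $(x_1,\ldots,x_n)\alpha_\sigma=(y_1,\ldots,y_n)$ with $y_{(i)\sigma}=x_i$. $(\mathscr{P}_{\infty}(X),\cup)$ is the semilattice of all finite subsets of $X$ (including $\emptyset$) under union. For semigroups $A,B$ and a homomorphism $\mathfrak{h}\colon A\to\operatorname{End}(B)$, $a\mapsto\mathfrak{h}_a$ (endomorphisms written on the right, composed left to right), the semidirect product $A\ltimes_{\mathfrak{h}}B$ is $A\times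 B$ with multiplication $(a_1,b_1)(a_2,b_2)=(a_1a_2,(b_1)\mathfrak{h}_{a_2}\,b_2)$. *)

(* Defs.v *)
From mathcomp Require Import all_boot all_order all_fingroup.
Set Implicit Arguments. Unset Strict Implicit. Unset Printing Implicit Defensive.

Definition pt (n : nat) := {x : {ffun 'I_n -> nat} | [forall i, 0 < x i]}.

(* Squared Euclidean distance (d(x,y) = d(x',y') iff squared distances agree). *)
Definition sqdist n (x y : pt n) : nat :=
  \sum_(i < n) ((val x i - val y i) + (val y i - val x i)) ^ 2.

Definition pmap n := pt n -> option (pt n).

(* composition written on the right: x (a b) = (x a) b *)
Definition pmcomp n (a b : pmap n) : pmap n := fun x => obind b (a x).

Definition is_pci n (a : pmap n) : Prop :=
  [/\ (forall x y z, a x = Some z -> a y = Some z -> x = y),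
      (forall x y ax ay, a x = Some ax -> a y = Some ay -> sqdist ax ay = sqdist x y),
      (exists s : seq (pt n), forall x, a x = None -> x \in s)
    & (exists s : seq (pt n), forall y, (forall x, a x <> Some y) -> y \in s)].

Definition INinf n := {a : pmap n | is_pci a}.

Definition finPset n := {F : pt n -> Prop | exists s : seq (pt n), forall x, F x -> x \in s}.

Lemma union_fin n (F G : finPset n) :
  exists s : seq (pt n), forall x, (sval F x \/ sval G x) -> x \in s.
Proof.
case: F G => F [s Hs] [G [t Ht]] /=; exists (s ++ t) => x [/Hs|/Ht] h;
  by rewrite mem_cat h ?orbT.
Qed.

Definition funion n (F G : finPset n) : finPset n :=
  exist _ (fun x => sval F x \/ sval G x) (union_fin F G).

(* The isometry alpha_sigma : (x_1..x_n) |-> (y_1..y_n) with y_{(i)sigma} = x_i. *)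
Lemma alpha_pos n (s : 'S_n) (x : pt n) :
  [forall j, 0 < [ffun j => val x ((s^-1)%g j)] j].
Proof.
apply/forallP => j; rewrite ffunE; case: x => x /= /forallP; exact.
Qed.

Definition alpha_s n (s : 'S_n) (x : pt n) : pt n :=
  exist _ [ffun j => val x ((s^-1)%g j)] (alpha_pos s x).

Lemma hact_fin n (s : 'S_n) (F : finPset n) :
  exists l : seq (pt n), forall y, (exists x, sval F x /\ y = alpha_s s x) -> y \in l.
Proof.
case: F => F [l Hl] /=; exists (map (alpha_s s) l) => y [x [Fx ->]].
by apply: map_f; apply: Hl.
Qed.

Definition hact n (s : 'S_n) (F : finPset n) : finPset n :=
  exist _ (fun y => exists x, sval F x /\ y = alpha_s s x) (hact_fin s F).

(* semidirect product S_n |x_h (P_infty(N^n), union):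
   (a1,b1)(a2,b2) = (a1 a2, (b1) h_{a2} U b2);
   mathcomp's product of permutations composes left to right: (s * t) x = t (s x). *)
Definition sd_mul n (p q : 'S_n * finPset n) : 'S_n * finPset n :=
  (p.1 * q.1, funion (hact q.1 p.2) q.2)%g.

(* Main.v *)
Require Import Defs.
From mathcomp Require Import all_boot all_order all_fingroup all_algebra zify ring.
From Stdlib Require Import Classical ClassicalEpsilon ProofIrrelevance FunctionalExtensionality PropExtensionality.
Set Implicit Arguments. Unset Strict Implicit. Unset Printing Implicit Defensive.
Import GRing.Theory Num.Theory.

Lemma sqdistZ n (x y : pt n) :
  (Posz (sqdist x y) = \sum_i (Posz (val x i) - Posz (val y i)) ^+ 2)%R.
Proof.
rewrite /sqdist (big_morph (fun k : nat => Posz k) PoszD (erefl (Posz 0))).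
apply: eq_bigr => i _.
set a := val x i; set b := val y i.
have [h|h] : (Posz ((a - b) + (b - a))%N = Posz a - Posz b \/ Posz ((a - b) + (b - a))%N = Posz b - Posz a)%R by lia.
- by rewrite -h -natrXE.
- by rewrite -opprB sqrrN -h -natrXE.
Qed.

Lemma alpha_val n (s : 'S_n) x j : val (alpha_s s x) j = val x ((s^-1)%g j).
Proof. by rewrite /= ffunE. Qed.

Lemma alpha_M n (s t : 'S_n) x : alpha_s (s * t)%g x = alpha_s t (alpha_s s x).
Proof. by apply: val_inj; apply/ffunP => j; rewrite !alpha_val invMg permM. Qed.

Lemma alpha_1 n x : alpha_s (1%g : 'S_n) x = x.
Proof. by apply: val_inj; apply/ffunP => j; rewrite alpha_val invg1 perm1. Qed.

Lemma alpha_K n (s : 'S_n) x : alpha_s (s^-1)%g (alpha_s s x) = x.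
Proof. by rewrite -alpha_M mulgV alpha_1. Qed.

Lemma alpha_Kv n (s : 'S_n) x : alpha_s s (alpha_s (s^-1)%g x) = x.
Proof. by rewrite -alpha_M mulVg alpha_1. Qed.

Lemma alpha_inj n (s : 'S_n) : injective (alpha_s s).
Proof. exact: can_inj (alpha_K s). Qed.

Lemma alpha_dist n (s : 'S_n) x y : sqdist (alpha_s s x) (alpha_s s y) = sqdist x y.
Proof.
rewrite /sqdist (reindex_inj (@perm_inj _ s)) /=.
by apply: eq_bigr => i _; rewrite !alpha_val permK.
Qed.

Lemma mkP_pos n (f : 'I_n -> nat) : [forall i, 0 < [ffun i => (f i).+1] i].
Proof. by apply/forallP => i; rewrite ffunE. Qed.

Definition mkP n (f : 'I_n -> nat) : pt n := exist (fun x : {ffun 'I_n -> nat} => is_true [forall i, 0 < x i]) _ (mkP_pos f).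

Lemma mkP_val n (f : 'I_n -> nat) i : val (mkP f) i = (f i).+1.
Proof. by rewrite /= ffunE. Qed.

Lemma pt_pos n (x : pt n) i : 0 < val x i.
Proof. by case: x => x /= /forallP. Qed.

Definition Mx n (l : seq (pt n)) : nat := \max_(x <- l) \max_(i < n) val x i.

Lemma notin_Mx n (l : seq (pt n)) (x : pt n) (i : 'I_n) : Mx l < val x i -> x \notin l.
Proof.
move=> h; apply/negP => hx; move: h; apply/negP; rewrite -leqNgt.
have h1 := @leq_bigmax_seq _ l xpredT (fun x : pt n => \max_(i < n) val x i) x hx isT.
have h2 := @leq_bigmax _ (fun i : 'I_n => val x i) i.
exact: leq_trans h2 h1.
Qed.
Local Open Scope ring_scope.
Definition del n (k m : 'I_n) : int := (m == k)%:R.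

Lemma sq_shift n (d : 'I_n -> int) k (c : int) :
  \sum_m (d m - c * del k m) ^+ 2 = \sum_m (d m) ^+ 2 - 2 * c * d k + c ^+ 2.
Proof.
rewrite (bigD1 k) //= [in RHS](bigD1 k) //= /del eqxx.
rewrite (eq_bigr (fun m => d m ^+ 2)); last by move=> m /negbTE ->; rewrite mulr0 subr0.
rewrite mulr1; ring.
Qed.

Lemma sum_del n (k : 'I_n) : \sum_m (del k m) ^+ 2 = 1.
Proof.
rewrite (bigD1 k) //= big1 /del ?eqxx ?addr0 ?expr1n // => m /negbTE ->.
by rewrite expr0n.
Qed.

Lemma unit_vec n (u : 'I_n -> int) : \sum_m (u m) ^+ 2 = 1 ->
  exists k, u k ^+ 2 = 1 /\ forall m, m != k -> u m = 0.
Proof.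
move=> hs.
have [k hk] : exists k, u k != 0.
  apply/existsP; apply: contraT; rewrite negb_exists => /forallP h.
  move: hs; rewrite big1 // => m _; have := h m; rewrite negbK => /eqP ->.
  by rewrite expr0n.
move: hs; rewrite (bigD1 k) //= => hs.
have h0 : 0 <= \sum_(m | m != k) u m ^+ 2 by apply: sumr_ge0 => m _; exact: sqr_ge0.
have h1 : 1 <= u k ^+ 2.
  rewrite expr2; move: hk; set z := u k; move=> hk; nia.
exists k; split.
  suff: u k ^+ 2 <= 1 by move=> h2; apply/eqP; rewrite Order.POrderTheory.eq_le h2 h1.
  rewrite -hs lerDl //.
have hz : \sum_(m | m != k) u m ^+ 2 = 0.
  apply/eqP; rewrite Order.POrderTheory.eq_le h0 andbT -(lerD2l (u k ^+ 2)) hs addr0 //.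
move=> m hm; have := psumr_eq0P (fun m _ => sqr_ge0 (u m)) hz hm.
by move/eqP; rewrite sqrf_eq0 => /eqP.
Qed.

Lemma structure n (a : Defs.pmap n) (i0 i1 : 'I_n) : i0 != i1 -> is_pci a ->
  exists s : 'S_n, forall x y, a x = Some y -> y = alpha_s s x.
Proof.
move=> h01 [hinj hiso [sd hsd] [sr hsr]].
pose K := Mx sd.
have dom : forall (x : pt n) i, (K < val x i)%N -> exists y, a x = Some y.
  move=> x i hi; case e: (a x) => [y|]; first by exists y.
  by have := hsd x e; rewrite (negbTE (notin_Mx hi)).
pose p := mkP (fun _ : 'I_n => K).
pose P := fun i : 'I_n => mkP (fun j => (K + (j == i))%N).
have [ap hap] : exists ap, a p = Some ap by apply: (dom p i0); rewrite mkP_val.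
pose b i := odflt p (a (P i)).
have hb : forall i, a (P i) = Some (b i).
  move=> i; have [|y hy] := dom (P i) i; first by rewrite mkP_val eqxx; lia.
  by rewrite /b hy.
pose Z (x : pt n) m := Posz (val x m).
pose u i m := Z (b i) m - Z ap m.
have hdist : forall x y ax ay, a x = Some ax -> a y = Some ay ->
    \sum_m (Z ax m - Z ay m) ^+ 2 = \sum_m (Z x m - Z y m) ^+ 2.
  by move=> x y ax ay hx hy; rewrite -!sqdistZ (hiso _ _ _ _ hx hy).
have hPp : forall i m, Z (P i) m - Z p m = del i m.
  by move=> i m; rewrite /Z !mkP_val /del; case: (m == i) => /=; lia.
have hu1 : forall i, \sum_m (u i m) ^+ 2 = 1.
  move=> i; rewrite (hdist _ _ _ _ (hb i) hap) -(sum_del i).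
  by apply: eq_bigr => m _; rewrite hPp.
pose tau i := odflt i0 [pick k | u i k != 0].
have htau : forall i, u i (tau i) ^+ 2 = 1 /\ forall m, m != tau i -> u i m = 0.
  move=> i; have [k [hk1 hk2]] := unit_vec (hu1 i).
  suff -> : tau i = k by [].
  rewrite /tau; case: pickP => [k' hk'|h] /=.
    by apply/eqP; apply: contraT => hne; move: hk'; rewrite hk2.
  by move: hk1; have := h k => /= /negbFE /eqP ->; rewrite expr0n.
pose c i := u i (tau i).
have hc2 : forall i, c i ^+ 2 = 1 by move=> i; case: (htau i).
have hu : forall i m, u i m = c i * del (tau i) m.
  move=> i m; rewrite /del; case: eqP => [->|/eqP hne]; first by rewrite mulr1.
  by rewrite mulr0; case: (htau i) => _ ->.
have tau_inj : injective tau.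
  move=> i j hij; apply/eqP; apply: contraT => hne.
  have h := hdist _ _ _ _ (hb i) (hb j).
  have e1 : \sum_m (Z (b i) m - Z (b j) m) ^+ 2 = \sum_m (u i m - c j * del (tau i) m) ^+ 2.
    by apply: eq_bigr => m _; rewrite hij -hu /u; congr (_ ^+ 2); rewrite /Z; lia.
  have e2 : \sum_m (Z (P i) m - Z (P j) m) ^+ 2 = \sum_m (del i m - 1 * del j m) ^+ 2.
    by apply: eq_bigr => m _; rewrite mul1r -!hPp; congr (_ ^+ 2); rewrite /Z; lia.
  move: h; rewrite e1 e2 !sq_shift hu1 sum_del -/(c i) /del eq_sym (negbTE hne) mulr0 => h.
  have h2 := hc2 i; have h3 := hc2 j.
  have : c i * c j = 0.
    move: h h2 h3; rewrite /= !expr2 => h h2 h3; nia.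
  by move/eqP; rewrite mulf_eq0 => /orP [] /eqP h0; [move: h2|move: h3]; rewrite h0 expr0n.
have hx : forall x y, a x = Some y -> forall i,
    Z y (tau i) - Z ap (tau i) = c i * (Z x i - Z p i).
  move=> x y hxy i.
  have hD := hdist _ _ _ _ hxy hap.
  have h := hdist _ _ _ _ hxy (hb i).
  have e1 : \sum_m (Z y m - Z (b i) m) ^+ 2 = \sum_m ((Z y m - Z ap m) - c i * del (tau i) m) ^+ 2.
    by apply: eq_bigr => m _; rewrite -hu /u; congr (_ ^+ 2); rewrite /Z; lia.
  have e2 : \sum_m (Z x m - Z (P i) m) ^+ 2 = \sum_m ((Z x m - Z p m) - 1 * del i m) ^+ 2.
    by apply: eq_bigr => m _; rewrite mul1r -hPp; congr (_ ^+ 2); rewrite /Z; lia.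
  move: h; rewrite e1 e2 !sq_shift hD expr1n hc2 => h.
  have h' : c i * (Z y (tau i) - Z ap (tau i)) = Z x i - Z p i.
    move: h; set w := (Z y (tau i) - Z ap (tau i)); set D := \sum_m _; set d := Z x i - Z p i.
    rewrite -!mulrA => h. have : 2 * (c i * w) = 2 * d by lia.
    move=> h2; set z := c i * w in h2 *; lia.
  by rewrite -h' mulrA -expr2 hc2 mul1r.
have hsign : forall i, c i = 1.
  move=> i; have := hc2 i; move/eqP; rewrite sqrf_eq1 => /orP [/eqP //|/eqP hneg].
  exfalso.
  pose N := val ap (tau i).
  pose x := mkP (fun j => if j == i then (K + N)%N else K).
  have [|y hy] := dom x i; first by rewrite /x mkP_val eqxx; lia.
  have := hx _ _ hy i; rewrite hneg /Z /x /p !mkP_val eqxx.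
  have := pt_pos y (tau i); rewrite /N; lia.
have other : forall i : 'I_n, exists j, j != i.
  move=> i; case: (eqVneq i i0) => [->|hne]; first by exists i1; rewrite eq_sym.
  by exists i0; rewrite eq_sym.
have hoff : forall i, val ap (tau i) = K.+1.
  move=> i; apply/eqP; rewrite eqn_leq; apply/andP; split.
  - have [j hj] := other (tau i).
    pose y := mkP (fun m => if m == tau i then 0%N else Mx sr).
    have : y \notin sr by apply: (@notin_Mx _ _ _ j); rewrite /y mkP_val (negbTE hj).
    move=> hyn; have [x hxy] : exists x, a x = Some y.
      apply: not_all_not_ex => hall; by rewrite (hsr y hall) in hyn.
    have := hx _ _ hxy i; rewrite hsign /Z /y /p !mkP_val eqxx.
    have := pt_pos x i; lia.
  - have [j hj] := other i.
    pose x := mkP (fun m => if m == i then 0%N else K).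
    have [|y hy] := dom x j; first by rewrite /x mkP_val (negbTE hj).
    have := hx _ _ hy i; rewrite hsign /Z /x /p !mkP_val eqxx.
    have := pt_pos y (tau i); lia.
exists (perm tau_inj) => x y hxy; apply: val_inj; apply/ffunP => j.
rewrite alpha_val; set i := ((perm tau_inj)^-1)%g j.
have hj : j = tau i by rewrite /i -[in LHS](permKV (perm tau_inj) j) permE.
have := hx _ _ hxy i; rewrite /Z hsign hoff /p mkP_val -hj mul1r => /(congr1 (fun z => z + Posz K.+1)); rewrite !subrK; by case.
Qed.

Lemma two_idx n : (2 <= n)%N -> exists i0 i1 : 'I_n, i0 != i1.
Proof.
move=> hn; have h0 : (0 < n)%N by lia.
have h1 : (1 < n)%N by lia.
by exists (Ordinal h0), (Ordinal h1).
Qed.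

Lemma struct2 n (hn : (2 <= n)%N) (a : Defs.pmap n) : is_pci a ->
  exists s : 'S_n, forall x y, a x = Some y -> y = alpha_s s x.
Proof. by have [i0 [i1 h]] := two_idx hn; apply: structure h. Qed.

Lemma uniq_s n (a : Defs.pmap n) (s1 s2 : 'S_n) : is_pci a ->
  (forall x y, a x = Some y -> y = alpha_s s1 x) ->
  (forall x y, a x = Some y -> y = alpha_s s2 x) -> s1 = s2.
Proof.
case: n a s1 s2 => [|n] a s1 s2 [_ _ [sd hsd] _] h1 h2.
  by apply/permP => -[].
pose K := Mx sd.
pose x := mkP (fun m : 'I_n.+1 => (K + m)%N).
have [y hy] : exists y, a x = Some y.
  case e: (a x) => [y|]; first by exists y.
  have := hsd x e; rewrite (negbTE (@notin_Mx _ _ _ ord0 _)) // /x mkP_val /=; lia.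
have e := h1 _ _ hy; rewrite (h2 _ _ hy) in e.
apply: invg_inj; apply/permP => j.
have := congr1 (fun z : pt n.+1 => val z j) e; rewrite !alpha_val /x !mkP_val.
by case => /eqP; rewrite eqn_add2l => /eqP /val_inj.
Qed.

Lemma pmcompE n (a b : Defs.pmap n) x z :
  pmcomp a b x = Some z <-> exists u, a x = Some u /\ b u = Some z.
Proof.
rewrite /pmcomp; case e: (a x) => [u|] /=.
  by split; [move=> h; exists u | case=> u' [[<-]]].
by split => // -[u []].
Qed.

Lemma comp_pci n (hn : (2 <= n)%N) (a b : Defs.pmap n) :
  is_pci a -> is_pci b -> is_pci (pmcomp a b).
Proof.
move=> ha hb.
have [sa hsa] := struct2 hn ha; have [sb hsb] := struct2 hn hb.
case: ha => [ia da [la hla] [ra hra]]; case: hb => [ib db [lb hlb] [rb hrb]].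
split.
- move=> x y z /pmcompE [u [hu hz]] /pmcompE [v [hv hz']].
  by apply: (ia _ _ u) => //; rewrite (ib _ _ _ hz hz').
- move=> x y ax ay /pmcompE [u [hu hx]] /pmcompE [v [hv hy]].
  by rewrite (db _ _ _ _ hx hy) (da _ _ _ _ hu hv).
- exists (la ++ map (alpha_s (sa^-1)%g) lb) => x; rewrite mem_cat /pmcomp.
  case e: (a x) => [u|] /=; last by rewrite (hla _ e).
  move=> hn'; apply/orP; right; rewrite (hsa _ _ e) in hn'.
  by rewrite -(alpha_K sa x); apply: map_f; apply: hlb.
- exists (rb ++ map (alpha_s sb) ra) => y hy; rewrite mem_cat.
  case: (classic (exists z, b z = Some y)) => [[z hz]|hno].
  + apply/orP; right; rewrite (hsb _ _ hz); apply: map_f; apply: hra => x hx.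
    by apply: (hy x); apply/pmcompE; exists z.
  + by rewrite hrb // => z hz; apply: hno; exists z.
Qed.

Definition sig_of n (a : INinf n) : 'S_n :=
  epsilon (inhabits 1%g) (fun s => forall x y, sval a x = Some y -> y = alpha_s s x).

Lemma sig_ofP n (hn : (2 <= n)%N) (a : INinf n) :
  forall x y, sval a x = Some y -> y = alpha_s (sig_of a) x.
Proof.
rewrite /sig_of; apply: (epsilon_spec (inhabits 1%g) (fun s => forall x y, sval a x = Some y -> y = alpha_s s x)).
exact: (struct2 hn (proj2_sig a)).
Qed.

Lemma ranC_fin n (a : INinf n) :
  exists s : seq (pt n), forall y, (forall x, sval a x <> Some y) -> y \in s.
Proof. by case: (proj2_sig a). Qed.

Definition ranC n (a : INinf n) : finPset n :=
  exist _ (fun y => forall x, sval a x <> Some y) (ranC_fin a).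

Definition Phi n (a : INinf n) : 'S_n * finPset n := (sig_of a, ranC a).

Lemma finP_eq n (F G : finPset n) : (forall y, sval F y <-> sval G y) -> F = G.
Proof.
move=> h; apply: eq_sig_hprop; first by move=> *; apply: proof_irrelevance.
by apply: functional_extensionality => y; apply: propositional_extensionality.
Qed.

Lemma INinf_eq n (a b : INinf n) : (forall x y, sval a x = Some y <-> sval b x = Some y) -> a = b.
Proof.
move=> h; apply: eq_sig_hprop; first by move=> *; apply: proof_irrelevance.
apply: functional_extensionality => x.
case ea: (sval a x) => [y|]; first by symmetry; apply/h.
by case eb: (sval b x) => [y|] //; move/h: eb; rewrite ea.
Qed.

Lemma key n (a : Defs.pmap n) (s : 'S_n) :
  (forall x y, a x = Some y -> y = alpha_s s x) ->
  forall x y, a x = Some y <-> (y = alpha_s s x /\ ~ (forall x', a x' <> Some y)).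
Proof.
move=> hs x y; split.
  by move=> h; split; [exact: hs | move=> hall; exact: (hall x h)].
case=> -> hn; have [x' hx'] := not_all_not_ex _ _ hn.
by have e := alpha_inj (hs _ _ hx'); rewrite {1}e.
Qed.

Lemma Phi_inj n (hn : (2 <= n)%N) : injective (@Phi n).
Proof.
move=> a b e; have es : sig_of a = sig_of b by exact: (congr1 fst e).
have er : ranC a = ranC b by exact: (congr1 snd e).
apply: INinf_eq => x y.
have ka := key (@sig_ofP n hn a); have kb := key (@sig_ofP n hn b).
have er' := congr1 (fun F : finPset n => sval F y) er; simpl in er'.
by rewrite ka kb es er'.
Qed.

Definition mkmap n (s : 'S_n) (F : finPset n) : Defs.pmap n := fun x =>
  if excluded_middle_informative (sval F (alpha_s s x)) then None else Some (alpha_s s x).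

Lemma mkmapE n (s : 'S_n) (F : finPset n) x y :
  mkmap s F x = Some y <-> y = alpha_s s x /\ ~ sval F y.
Proof.
rewrite /mkmap; case: excluded_middle_informative => h; split => //.
- by case=> -> /(_ h).
- by case=> <-.
- by case=> ->.
Qed.

Lemma mkmap_pci n (s : 'S_n) (F : finPset n) : is_pci (mkmap s F).
Proof.
split.
- by move=> x y z /mkmapE [-> _] /mkmapE [/alpha_inj].
- by move=> x y ax ay /mkmapE [-> _] /mkmapE [-> _]; rewrite alpha_dist.
- case: F => F [l hl]; exists (map (alpha_s (s^-1)%g) l) => x.
  rewrite /mkmap; case: excluded_middle_informative => //= h _.
  by rewrite -(alpha_K s x); apply: map_f; apply hl.
- case: F => F [l hl]; exists l => y hy; apply hl.
  apply: NNPP => hF; apply: (hy (alpha_s (s^-1)%g y)); apply/mkmapE.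
  by rewrite alpha_Kv.
Qed.

Lemma Phi_surj n (hn : (2 <= n)%N) (q : 'S_n * finPset n) : exists a, Phi a = q.
Proof.
case: q => s F.
exists (exist _ (mkmap s F) (mkmap_pci s F)).
rewrite /Phi; congr pair.
- apply: (@uniq_s n (mkmap s F)); first exact: mkmap_pci.
    exact: (@sig_ofP n hn (exist _ (mkmap s F) (mkmap_pci s F))).
  by move=> x y /mkmapE [].
- apply: finP_eq => y /=; split.
  + move=> hy; apply: NNPP => hF; apply: (hy (alpha_s (s^-1)%g y)); apply/mkmapE.
    by rewrite alpha_Kv.
  + by move=> hF x /mkmapE [_].
Qed.

Lemma Phi_bij n (hn : (2 <= n)%N) : bijective (@Phi n).
Proof.
pose g q := proj1_sig (constructive_indefinite_description _ (Phi_surj hn q)).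
have hg : forall q, Phi (g q) = q.
  by move=> q; rewrite /g; case: constructive_indefinite_description.
exists g => [a|q]; last exact: hg.
by apply: (Phi_inj hn); rewrite hg.
Qed.

Lemma Phi_hom n (hn : (2 <= n)%N) (a b c : INinf n) :
  sval c = pmcomp (sval a) (sval b) -> Phi c = sd_mul (Phi a) (Phi b).
Proof.
move=> hc; rewrite /Phi /sd_mul /=; congr pair.
- apply: (@uniq_s n (sval c)); first exact: (proj2_sig c).
    exact: (@sig_ofP n hn c).
  move=> x y; rewrite hc => /pmcompE [u [hu hy]].
  by rewrite alpha_M (@sig_ofP n hn b _ _ hy) (@sig_ofP n hn a _ _ hu).
- apply: finP_eq => y /=; rewrite hc; split.
  + move=> hy; case: (classic (exists z, sval b z = Some y)) => [[z hz]|hno].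
    * left; exists z; split; last exact: (@sig_ofP n hn b _ _ hz).
      by move=> x hx; apply: (hy x); apply/pmcompE; exists z.
    * by right => z hz; apply: hno; exists z.
  + case=> [[z [hz ->]]|hb] x /pmcompE [u [hu hy]].
    * have e := alpha_inj (@sig_ofP n hn b _ _ hy).
      by apply: (hz x); rewrite hu e.
    * exact: (hb u).
Qed.

Local Close Scope ring_scope.
Theorem theorem4p5 (n : nat) (hn : 2 <= n) :
  (forall a b : INinf n, exists c : INinf n, sval c = pmcomp (sval a) (sval b)) /\
  exists Phi : INinf n -> 'S_n * finPset n,
    bijective Phi /\
    forall a b c : INinf n, sval c = pmcomp (sval a) (sval b) ->
      Phi c = sd_mul (Phi a) (Phi b).
Proof.
split.
  move=> a b; exists (exist _ _ (comp_pci hn (proj2_sig a) (proj2_sig b))) => //.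
exists (@Phi n); split; [exact: Phi_bij | exact: Phi_hom].
Qed.
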